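(* For real $z\ge 10$ let $$c_2(z)=\sum_{\substack{n_1,n_2,n_3,n_4\le z\\ \sqrt{n_1}+\sqrt{n_2}=\sqrt{n_3}+\sqrt{n_4}}}\frac{d(n_1)d(n_2)d(n_3)d(n_4)\,(\sqrt{n_1}+\sqrt{n_2}+\sqrt{n_3}+\sqrt{n_4})}{(n_1n_2n_3n_4)^{3/4}},$$ the sum being over positive integers. Then $c_2(z)\ll\log^4 z$ uniformly for $z\ge 10$.
   Context: $d(n)$ denotes the number of positive divisors of $n$. $f\ll g$ means $|f|\le Cg$ for some absolute positive constant $C$. *)

(* Defs.v *)
From Stdlib Require Import Reals Lra Lia Arith List.
Import ListNotations.
Open Scope R_scope.

Definition ndiv (n : nat) : nat :=
  length (filter (fun k => Nat.eqb (n mod k) 0) (seq 1 n)).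

Definition sumR (l : list nat) (f : nat -> R) : R :=
  fold_right (fun n acc => f n + acc) 0 l.

(* floor of z as a natural (z >= 0): positive integers n <= z are 1..floor z *)
Definition nfloor (z : R) : nat := Z.to_nat (Int_part z).

Definition c2_term (n1 n2 n3 n4 : nat) : R :=
  if Req_EM_T (sqrt (INR n1) + sqrt (INR n2)) (sqrt (INR n3) + sqrt (INR n4))
  then INR (ndiv n1 * ndiv n2 * ndiv n3 * ndiv n4)
       * (sqrt (INR n1) + sqrt (INR n2) + sqrt (INR n3) + sqrt (INR n4))
       / Rpower (INR (n1 * n2 * n3 * n4)) (3 / 4)
  else 0.

Definition c2 (z : R) : R :=
  let N := nfloor z in
  sumR (seq 1 N) (fun n1 => sumR (seq 1 N) (fun n2 =>
  sumR (seq 1 N) (fun n3 => sumR (seq 1 N) (fun n4 => c2_term n1 n2 n3 n4)))).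

(* Main.v *)
Require Import Defs.
From Stdlib Require Import Reals Lra Lia Arith List ZArith Znumtheory Classical.
Import ListNotations.
Open Scope R_scope.

Lemma sumR_nil f : sumR [] f = 0. Proof. reflexivity. Qed.
Lemma sumR_cons x l f : sumR (x :: l) f = f x + sumR l f. Proof. reflexivity. Qed.
Lemma sumR_app l1 l2 f : sumR (l1 ++ l2) f = sumR l1 f + sumR l2 f.
Proof. induction l1; simpl; [ring| rewrite IHl1; ring]. Qed.

Lemma sumR_ext l f g : (forall x, In x l -> f x = g x) -> sumR l f = sumR l g.
Proof. induction l; simpl; intros H; auto. rewrite H, IHl; auto. Qed.

Lemma sumR_le l f g : (forall x, In x l -> f x <= g x) -> sumR l f <= sumR l g.
Proof. induction l; simpl; intros H; [lra|]. apply Rplus_le_compat; auto. Qed.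

Lemma sumR_nonneg l f : (forall x, In x l -> 0 <= f x) -> 0 <= sumR l f.
Proof. induction l; simpl; intros H; [lra|]. apply Rplus_le_le_0_compat; auto. Qed.

Lemma sumR_plus l f g : sumR l (fun x => f x + g x) = sumR l f + sumR l g.
Proof. induction l; simpl; [ring| rewrite IHl; ring]. Qed.

Lemma sumR_scal l c f : sumR l (fun x => c * f x) = c * sumR l f.
Proof. induction l; simpl; [ring| rewrite IHl; ring]. Qed.

Lemma sumR_scal_r l c f : sumR l (fun x => f x * c) = sumR l f * c.
Proof. induction l; simpl; [ring| rewrite IHl; ring]. Qed.

Lemma sumR_zero l : sumR l (fun _ => 0) = 0.
Proof. induction l; simpl; [ring| rewrite IHl; ring]. Qed.

Lemma sumR_swap (l m : list nat) (F : nat -> nat -> R) :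
  sumR l (fun x => sumR m (fun y => F x y)) = sumR m (fun y => sumR l (fun x => F x y)).
Proof.
  induction l; simpl.
  - rewrite sumR_zero; auto.
  - rewrite IHl, <- sumR_plus. reflexivity.
Qed.

Lemma sumR_unique (l : list nat) (P : nat -> bool) (Y : R) :
  NoDup l -> 0 <= Y ->
  (forall x y, In x l -> In y l -> P x = true -> P y = true -> x = y) ->
  sumR l (fun x => if P x then Y else 0) <= Y.
Proof.
  induction l as [|a l IH]; simpl; intros ND HY HU; [lra|].
  inversion ND; subst.
  destruct (P a) eqn:Pa.
  - assert (sumR l (fun x => if P x then Y else 0) = 0).
    { transitivity (sumR l (fun _ => 0)); [|apply sumR_zero].
      apply sumR_ext. intros x Hx. destruct (P x) eqn:Px; auto.
      exfalso. assert (x = a) by (apply HU; auto). subst; tauto. }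
    lra.
  - assert (sumR l (fun x => if P x then Y else 0) <= Y) by (apply IH; auto).
    lra.
Qed.

Lemma sumR_point (l : list nat) f x : In x l -> (forall y, In y l -> 0 <= f y) -> f x <= sumR l f.
Proof.
  induction l; simpl; intros Hx H; [tauto|].
  destruct Hx as [<-|Hx].
  - assert (0 <= sumR l f) by (apply sumR_nonneg; auto). lra.
  - assert (f x <= sumR l f) by (apply IHl; auto). specialize (H a (or_introl eq_refl)). lra.
Qed.

Lemma sumR_prefix f M N : (M <= N)%nat -> (forall y, 0 <= f y) ->
  sumR (seq 1 M) f <= sumR (seq 1 N) f.
Proof.
  intros H Hf. replace N with (M + (N - M))%nat by lia.
  rewrite seq_app, sumR_app.
  assert (0 <= sumR (seq (1 + M) (N - M)) f) by (apply sumR_nonneg; auto). lra.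
Qed.

Lemma sumR_mul l m f g : sumR l f * sumR m g = sumR l (fun x => sumR m (fun y => f x * g y)).
Proof.
  rewrite <- sumR_scal_r. apply sumR_ext; intros. rewrite <- sumR_scal. reflexivity.
Qed.

Lemma in_seq1 x N : In x (seq 1 N) <-> (1 <= x <= N)%nat.
Proof. rewrite in_seq. lia. Qed.
Definition dv (k n : nat) : bool := Nat.eqb (n mod k) 0.
Definition dsum (N n : nat) : R := sumR (seq 1 N) (fun k => if dv k n then 1 else 0).
Definition dd (n : nat) : R := INR (ndiv n).

Lemma dv_spec k n : (1 <= k)%nat -> (dv k n = true <-> Nat.divide k n).
Proof.
  intros Hk. unfold dv. rewrite Nat.eqb_eq. apply Nat.Lcm0.mod_divide.
Qed.

Lemma sum_filter_len (p : nat -> bool) l :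
  INR (length (filter p l)) = sumR l (fun k => if p k then 1 else 0).
Proof.
  induction l; [reflexivity|]. cbn [filter]. rewrite sumR_cons.
  destruct (p a); [cbn [length]; rewrite S_INR, IHl; ring | rewrite IHl; ring].
Qed.

Lemma sum_one l : sumR l (fun _ => 1) = INR (length l).
Proof. induction l; [reflexivity|]. rewrite sumR_cons. cbn [length]. rewrite S_INR, IHl; ring. Qed.

Lemma dd_sum n N : (1 <= n <= N)%nat -> dd n = dsum N n.
Proof.
  intros H. unfold dd, dsum, ndiv. rewrite sum_filter_len.
  replace N with (n + (N - n))%nat by lia. rewrite seq_app, sumR_app.
  rewrite (sumR_ext (seq (1 + n) (N - n)) _ (fun _ => 0)).
  - rewrite sumR_zero, Rplus_0_r. reflexivity.
  - intros k Hk. apply in_seq in Hk. unfold dv. rewrite Nat.mod_small by lia.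
    destruct n; [lia|]. reflexivity.
Qed.

Lemma dsum_nonneg N n : 0 <= dsum N n.
Proof. apply sumR_nonneg. intros. destruct (dv x n); lra. Qed.

Lemma dd_nonneg n : 0 <= dd n.
Proof. apply pos_INR. Qed.

Lemma ind_nonneg (b : bool) : 0 <= (if b then 1 else 0).
Proof. destruct b; lra. Qed.

Lemma divide_split e m n : (1 <= e)%nat -> (1 <= m)%nat -> Nat.divide e (m * n) ->
  Nat.divide (Nat.gcd e m) m /\ Nat.divide (e / Nat.gcd e m) n /\
  e = (Nat.gcd e m * (e / Nat.gcd e m))%nat /\ (1 <= Nat.gcd e m)%nat.
Proof.
  intros He Hm Hd.
  set (g := Nat.gcd e m).
  assert (Hg0 : g <> 0%nat). { unfold g. intro H0. apply Nat.gcd_eq_0 in H0. lia. }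
  destruct (Nat.gcd_divide_l e m) as [e' He']. fold g in He'.
  destruct (Nat.gcd_divide_r e m) as [m' Hm']. fold g in Hm'.
  assert (Hcop : Nat.gcd (e / g) (m / g) = 1%nat) by (apply Nat.gcd_div_gcd; auto).
  rewrite He' in Hcop at 1. rewrite Hm' in Hcop. rewrite !Nat.div_mul in Hcop by auto.
  rewrite He'. rewrite Nat.div_mul by auto.
  split; [apply Nat.gcd_divide_r|]. split; [|split; [ring|lia]].
  apply (Nat.gauss _ m'); auto.
  rewrite He', Hm' in Hd. destruct Hd as [k Hk].
  exists k. apply (Nat.mul_cancel_r _ _ g); auto.
  replace (m' * n * g)%nat with (m' * g * n)%nat by ring. rewrite Hk. ring.
Qed.

Lemma dd_submult m n : (1 <= m)%nat -> (1 <= n)%nat -> dd (m * n) <= dd m * dd n.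
Proof.
  intros Hm Hn. set (M := (m * n)%nat).
  assert (HmM : (m <= M)%nat) by (unfold M; nia).
  assert (HnM : (n <= M)%nat) by (unfold M; nia).
  rewrite (dd_sum M M) by (unfold M; nia).
  rewrite (dd_sum m M), (dd_sum n M) by lia.
  unfold dsum. rewrite sumR_mul.
  apply Rle_trans with (sumR (seq 1 M) (fun e => sumR (seq 1 M) (fun x => sumR (seq 1 M)
     (fun y => ((if dv x m then 1 else 0) * (if dv y n then 1 else 0)) *
               (if Nat.eqb e (x * y) then 1 else 0))))).
  - apply sumR_le. intros e He. apply in_seq1 in He.
    destruct (dv e M) eqn:D; [|apply sumR_nonneg; intros; apply sumR_nonneg; intros;
       apply Rmult_le_pos; [apply Rmult_le_pos|]; apply ind_nonneg].
    apply dv_spec in D; [|lia]. unfold M in D.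
    destruct (divide_split e m n) as (H1 & H2 & H3 & H4); try lia; auto.
    set (x := Nat.gcd e m) in *. set (y := (e / x)%nat) in *.
    assert (Hx : (x <= m)%nat) by (apply Nat.divide_pos_le; lia || auto).
    assert (Hy1 : (1 <= y)%nat) by (destruct y; lia).
    assert (Hy : (y <= n)%nat) by (apply Nat.divide_pos_le; lia || auto).
    eapply Rle_trans; [|apply (sumR_point _ _ x)].
    2: apply in_seq1; lia.
    2: intros; apply sumR_nonneg; intros;
       apply Rmult_le_pos; [apply Rmult_le_pos|]; apply ind_nonneg.
    eapply Rle_trans; [|apply (sumR_point _ _ y)].
    2: apply in_seq1; lia.
    2: intros; apply Rmult_le_pos; [apply Rmult_le_pos|]; apply ind_nonneg.
    assert (dv x m = true) by (apply dv_spec; auto).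
    assert (dv y n = true) by (apply dv_spec; auto; lia).
    rewrite H, H0. rewrite (proj2 (Nat.eqb_eq _ _) H3). lra.
  - rewrite sumR_swap. apply sumR_le. intros x Hx.
    rewrite sumR_swap. apply sumR_le. intros y Hy.
    rewrite sumR_scal.
    assert (sumR (seq 1 M) (fun e => if Nat.eqb e (x*y) then 1 else 0) <= 1).
    { apply sumR_unique; [apply seq_NoDup|lra|].
      intros a b _ _ Ha Hb. apply Nat.eqb_eq in Ha, Hb. lia. }
    assert (0 <= (if dv x m then 1 else 0) * (if dv y n then 1 else 0))
      by (apply Rmult_le_pos; apply ind_nonneg).
    nra.
Qed.

Lemma count_sq n : sumR (seq 1 n) (fun j => if Nat.leb (j * j) n then 1 else 0) = INR (Nat.sqrt n).
Proof.
  set (s := Nat.sqrt n).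
  assert (Hs : (s <= n)%nat) by apply Nat.sqrt_le_lin.
  destruct (Nat.sqrt_spec n) as [S1 S2]; [lia|]. fold s in S1, S2.
  replace n with (s + (n - s))%nat at 1 by lia. rewrite seq_app, sumR_app.
  rewrite (sumR_ext (seq 1 s) _ (fun _ => 1)).
  rewrite (sumR_ext (seq (1 + s) (n - s)) _ (fun _ => 0)).
  - rewrite sumR_zero, sum_one, length_seq. ring.
  - intros j Hj. apply in_seq in Hj. destruct (Nat.leb_spec (j*j) n); auto. nia.
  - intros j Hj. apply in_seq in Hj. destruct (Nat.leb_spec (j*j) n); auto. nia.
Qed.

Lemma dd_sqrt n : (1 <= n)%nat -> dd n <= 2 * sqrt (INR n).
Proof.
  intros Hn. rewrite (dd_sum n n) by lia. unfold dsum.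
  apply Rle_trans with (sumR (seq 1 n) (fun k => (if Nat.leb (k*k) n then 1 else 0) +
     sumR (seq 1 n) (fun j => (if Nat.leb (j*j) n then 1 else 0) * (if Nat.eqb (j*k) n then 1 else 0)))).
  - apply sumR_le. intros k Hk. apply in_seq1 in Hk.
    assert (0 <= sumR (seq 1 n) (fun j => (if Nat.leb (j*j) n then 1 else 0) * (if Nat.eqb (j*k) n then 1 else 0)))
      by (apply sumR_nonneg; intros; apply Rmult_le_pos; apply ind_nonneg).
    destruct (Nat.leb_spec (k*k) n). { destruct (dv k n); lra. }
    destruct (dv k n) eqn:D; [|lra].
    apply dv_spec in D; [|lia]. destruct D as [j Hj].
    assert (Hj1 : (1 <= j)%nat) by (destruct j; lia).
    assert (Hjk : (j < k)%nat) by nia.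
    eapply Rle_trans; [|apply Rplus_le_compat_l; apply (sumR_point _ _ j)].
    2: apply in_seq1; nia.
    2: intros; apply Rmult_le_pos; apply ind_nonneg.
    assert (H1 : (j * j <= n)%nat) by nia.
    cbv beta. rewrite (proj2 (Nat.leb_le _ _) H1).
    rewrite (proj2 (Nat.eqb_eq (j*k) n)) by lia. lra.
  - rewrite sumR_plus, sumR_swap.
    rewrite count_sq.
    assert (sumR (seq 1 n) (fun j => sumR (seq 1 n) (fun k => (if Nat.leb (j*j) n then 1 else 0) *
       (if Nat.eqb (j*k) n then 1 else 0))) <= INR (Nat.sqrt n)).
    { rewrite <- count_sq. apply sumR_le. intros j Hj. apply in_seq1 in Hj.
      rewrite sumR_scal.
      assert (sumR (seq 1 n) (fun k => if Nat.eqb (j*k) n then 1 else 0) <= 1).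
      { apply sumR_unique; [apply seq_NoDup|lra|].
        intros a b _ _ Ha Hb. apply Nat.eqb_eq in Ha, Hb. nia. }
      pose proof (ind_nonneg (Nat.leb (j*j) n)). nra. }
    assert (INR (Nat.sqrt n) <= sqrt (INR n)).
    { rewrite <- (sqrt_square (INR (Nat.sqrt n))) by apply pos_INR.
      apply sqrt_le_1_alt. rewrite <- mult_INR. apply le_INR.
      destruct (Nat.sqrt_spec n); lia. }
    lra.
Qed.

Lemma dd_sq_le n : (1 <= n)%nat -> dd n * dd n <= 4 * INR n.
Proof.
  intros Hn. pose proof (dd_sqrt n Hn). pose proof (dd_nonneg n).
  pose proof (sqrt_sqrt (INR n) (pos_INR n)). pose proof (sqrt_pos (INR n)). nra.
Qed.
Lemma lcm_gcd x y : (Nat.lcm x y * Nat.gcd x y = x * y)%nat.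
Proof.
  unfold Nat.lcm. destruct (Nat.gcd_divide_r x y) as [k Hk].
  destruct (Nat.eq_dec (Nat.gcd x y) 0) as [E|E].
  - rewrite E. apply Nat.gcd_eq_0 in E. destruct E; subst. simpl. lia.
  - set (g := Nat.gcd x y) in *. rewrite Hk. rewrite Nat.div_mul by auto. ring.
Qed.

Lemma lcm_pos x y : (1 <= x)%nat -> (1 <= y)%nat -> (1 <= Nat.lcm x y)%nat.
Proof.
  intros. pose proof (lcm_gcd x y). destruct (Nat.lcm x y); [|lia]. simpl in H1. nia.
Qed.

Lemma gcd_pos x y : (1 <= x)%nat -> (1 <= Nat.gcd x y)%nat.
Proof. intros. destruct (Nat.gcd x y) eqn:E; [|lia]. apply Nat.gcd_eq_0 in E. lia. Qed.

Lemma dv_lcm x y a : (1 <= x)%nat -> (1 <= y)%nat ->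
  (if dv x a then 1 else 0) * (if dv y a then 1 else 0) = (if dv (Nat.lcm x y) a then 1 else 0).
Proof.
  intros Hx Hy. pose proof (lcm_pos x y Hx Hy).
  destruct (dv (Nat.lcm x y) a) eqn:E.
  - apply dv_spec in E; auto. apply Nat.lcm_divide_iff in E as [E1 E2].
    apply dv_spec in E1; auto. apply dv_spec in E2; auto. rewrite E1, E2; ring.
  - destruct (dv x a) eqn:E1; destruct (dv y a) eqn:E2; try ring.
    apply dv_spec in E1; auto. apply dv_spec in E2; auto.
    assert (Nat.divide (Nat.lcm x y) a) by (apply Nat.lcm_divide_iff; auto).
    apply dv_spec in H0; auto. congruence.
Qed.

Section Weights.
Variable w : nat -> R.
Hypothesis Wpos : forall n, (1 <= n)%nat -> 0 < w n.
Hypothesis Wmul : forall m n, (1 <= m)%nat -> (1 <= n)%nat -> w (m * n)%nat = w m * w n.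
Variable N : nat.
Let Z := sumR (seq 1 N) w.

Lemma Z_nonneg : 0 <= Z.
Proof. apply sumR_nonneg. intros x Hx. apply in_seq1 in Hx. left; apply Wpos; lia. Qed.

Lemma divsum_w m : (1 <= m)%nat ->
  sumR (seq 1 N) (fun q => (if dv m q then 1 else 0) * w q) <= w m * Z.
Proof.
  intros Hm.
  apply Rle_trans with (sumR (seq 1 N) (fun q => sumR (seq 1 N) (fun k =>
     (if Nat.eqb q (m * k) then 1 else 0) * (w m * w k)))).
  - apply sumR_le. intros q Hq. apply in_seq1 in Hq.
    destruct (dv m q) eqn:D.
    + apply dv_spec in D; auto. destruct D as [k Hk].
      assert (1 <= k)%nat by (destruct k; lia).
      eapply Rle_trans; [|apply (sumR_point _ _ k)].
      * cbv beta. rewrite (proj2 (Nat.eqb_eq q (m*k))) by lia. rewrite <- Wmul by lia.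
        rewrite Hk, Nat.mul_comm. lra.
      * apply in_seq1; nia.
      * intros y Hy. apply in_seq1 in Hy. apply Rmult_le_pos; [apply ind_nonneg|].
        left; apply Rmult_lt_0_compat; apply Wpos; lia.
    + rewrite Rmult_0_l. apply sumR_nonneg. intros y Hy. apply in_seq1 in Hy.
      apply Rmult_le_pos; [apply ind_nonneg|].
      left; apply Rmult_lt_0_compat; apply Wpos; lia.
  - rewrite sumR_swap. unfold Z. rewrite <- sumR_scal. apply sumR_le.
    intros k Hk. apply in_seq1 in Hk. rewrite sumR_scal_r.
    assert (sumR (seq 1 N) (fun q => if Nat.eqb q (m*k) then 1 else 0) <= 1).
    { apply sumR_unique; [apply seq_NoDup|lra|]. intros a b _ _ Ha Hb.
      apply Nat.eqb_eq in Ha, Hb. lia. }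
    assert (0 < w m * w k) by (apply Rmult_lt_0_compat; apply Wpos; lia).
    nra.
Qed.

Lemma lcm_sum : sumR (seq 1 N) (fun x => sumR (seq 1 N) (fun y => w (Nat.lcm x y))) <= Z * Z * Z.
Proof.
  apply Rle_trans with (sumR (seq 1 N) (fun x => sumR (seq 1 N) (fun y => sumR (seq 1 N) (fun h =>
     / w h * (((if dv h x then 1 else 0) * w x) * ((if dv h y then 1 else 0) * w y)))))).
  - apply sumR_le. intros x Hx. apply in_seq1 in Hx. apply sumR_le. intros y Hy. apply in_seq1 in Hy.
    set (g := Nat.gcd x y).
    assert (Hg : (1 <= g)%nat) by (apply gcd_pos; lia).
    assert (Hgx : (g <= x)%nat) by (apply Nat.divide_pos_le; [lia|apply Nat.gcd_divide_l]).
    eapply Rle_trans; [|apply (sumR_point _ _ g)].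
    + cbv beta.
      assert (dv g x = true) by (apply dv_spec; auto; apply Nat.gcd_divide_l).
      assert (dv g y = true) by (apply dv_spec; auto; apply Nat.gcd_divide_r).
      rewrite H, H0.
      pose proof (lcm_gcd x y). fold g in H1.
      pose proof (lcm_pos x y ltac:(lia) ltac:(lia)).
      assert (w (Nat.lcm x y) * w g = w x * w y) by (rewrite <- !Wmul by lia; rewrite H1; auto).
      pose proof (Wpos g Hg).
      apply Req_le. field_simplify_eq; [|lra]. lra.
    + apply in_seq1; lia.
    + intros h Hh. apply in_seq1 in Hh. pose proof (Wpos h ltac:(lia)).
      pose proof (Wpos x ltac:(lia)). pose proof (Wpos y ltac:(lia)).
      apply Rmult_le_pos; [left; apply Rinv_0_lt_compat; auto|].
      apply Rmult_le_pos; apply Rmult_le_pos; try apply ind_nonneg; lra.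
  - rewrite (sumR_ext _ _ (fun x => sumR (seq 1 N) (fun h => sumR (seq 1 N) (fun y =>
       / w h * (((if dv h x then 1 else 0) * w x) * ((if dv h y then 1 else 0) * w y))))))
      by (intros; apply sumR_swap).
    rewrite sumR_swap.
    apply Rle_trans with (sumR (seq 1 N) (fun h => / w h * ((w h * Z) * (w h * Z)))).
    + apply sumR_le. intros h Hh. apply in_seq1 in Hh.
      rewrite (sumR_ext _ _ (fun x => / w h * ((if dv h x then 1 else 0) * w x) *
          sumR (seq 1 N) (fun y => (if dv h y then 1 else 0) * w y))).
      2: { intros. rewrite <- sumR_scal. apply sumR_ext. intros. ring. }
      rewrite sumR_scal_r.
      rewrite sumR_scal.
      pose proof (divsum_w h ltac:(lia)). pose proof (Wpos h ltac:(lia)).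
      assert (0 <= sumR (seq 1 N) (fun y => (if dv h y then 1 else 0) * w y)).
      { apply sumR_nonneg. intros y Hy. apply in_seq1 in Hy. pose proof (Wpos y ltac:(lia)).
        pose proof (ind_nonneg (dv h y)). nra. }
      assert (0 < / w h) by (apply Rinv_0_lt_compat; auto).
      rewrite Rmult_assoc. apply Rmult_le_compat_l; [lra|]. apply Rmult_le_compat; auto.
    + rewrite (sumR_ext _ _ (fun h => (Z * Z) * w h)).
      * rewrite sumR_scal. unfold Z at 3. lra.
      * intros h Hh. apply in_seq1 in Hh. pose proof (Wpos h ltac:(lia)). field. lra.
Qed.

Lemma moment2 : sumR (seq 1 N) (fun a => dd a * dd a * w a) <= Z * Z * Z * Z.
Proof.
  apply Rle_trans with (sumR (seq 1 N) (fun a => sumR (seq 1 N) (fun x => sumR (seq 1 N)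
      (fun y => (if dv (Nat.lcm x y) a then 1 else 0) * w a)))).
  - apply Req_le. apply sumR_ext. intros a Ha. apply in_seq1 in Ha.
    rewrite (dd_sum a N) by lia. unfold dsum. rewrite sumR_mul, <- sumR_scal_r.
    apply sumR_ext. intros x Hx. apply in_seq1 in Hx. rewrite <- sumR_scal_r.
    apply sumR_ext. intros y Hy. apply in_seq1 in Hy. rewrite dv_lcm by lia. ring.
  - rewrite sumR_swap.
    apply Rle_trans with (sumR (seq 1 N) (fun x => sumR (seq 1 N) (fun y => w (Nat.lcm x y) * Z))).
    + apply sumR_le. intros x Hx. apply in_seq1 in Hx. rewrite sumR_swap. apply sumR_le.
      intros y Hy. apply in_seq1 in Hy. apply divsum_w. apply lcm_pos; lia.
    + rewrite (sumR_ext _ _ (fun x => sumR (seq 1 N) (fun y => w (Nat.lcm x y)) * Z))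
        by (intros; apply sumR_scal_r).
      rewrite sumR_scal_r. pose proof lcm_sum. pose proof Z_nonneg.
      apply (Rmult_le_compat_r Z) in H; [lra|auto].
Qed.
End Weights.

Lemma moment4 (w w' : nat -> R) N :
  (forall n, (1 <= n)%nat -> 0 < w n) ->
  (forall m n, (1 <= m)%nat -> (1 <= n)%nat -> w (m * n)%nat = w m * w n) ->
  (forall n, (1 <= n)%nat -> 0 < w' n) ->
  (forall m n, (1 <= m)%nat -> (1 <= n)%nat -> w' (m * n)%nat = w' m * w' n) ->
  (forall n, (1 <= n)%nat -> w n = w' n * w' n) ->
  (forall m n, (1 <= m <= n)%nat -> w' n <= w' m) ->
  sumR (seq 1 N) (fun a => (dd a * dd a) * (dd a * dd a) * w a) <=
  sumR (seq 1 N) w * ((sumR (seq 1 N) w') ^ 3 * (sumR (seq 1 N) w') ^ 3).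
Proof.
  intros Wp Wm W'p W'm Wsq Wdec.
  set (Z := sumR (seq 1 N) w). set (Z' := sumR (seq 1 N) w').
  assert (HZ : 0 <= Z) by (apply Z_nonneg; auto).
  assert (HZ' : 0 <= Z') by (apply Z_nonneg; auto).
  set (D := fun a => sumR (seq 1 N) (fun x => sumR (seq 1 N) (fun y =>
            (if dv (Nat.lcm x y) a then 1 else 0)))).
  assert (HD : forall a, (1 <= a <= N)%nat -> dd a * dd a = D a).
  { intros a Ha. rewrite (dd_sum a N) by lia. unfold dsum, D. rewrite sumR_mul.
    apply sumR_ext. intros x Hx. apply in_seq1 in Hx. apply sumR_ext. intros y Hy. apply in_seq1 in Hy.
    apply dv_lcm; lia. }
  apply Rle_trans with (sumR (seq 1 N) (fun a => sumR (seq 1 N) (fun x => sumR (seq 1 N) (fun y =>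
       sumR (seq 1 N) (fun u => sumR (seq 1 N) (fun v =>
       (if dv (Nat.lcm (Nat.lcm x y) (Nat.lcm u v)) a then 1 else 0) * w a)))))).
  - apply Req_le. apply sumR_ext. intros a Ha. apply in_seq1 in Ha. rewrite HD by lia.
    unfold D. rewrite Rmult_assoc, <- sumR_scal_r. apply sumR_ext. intros x Hx. apply in_seq1 in Hx.
    rewrite <- sumR_scal_r. apply sumR_ext. intros y Hy. apply in_seq1 in Hy.
    rewrite <- sumR_scal_r, <- sumR_scal. apply sumR_ext. intros u Hu. apply in_seq1 in Hu.
    rewrite <- sumR_scal_r, <- sumR_scal. apply sumR_ext. intros v Hv. apply in_seq1 in Hv.
    rewrite <- (dv_lcm (Nat.lcm x y) (Nat.lcm u v) a) by (apply lcm_pos; lia). ring.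
  - rewrite sumR_swap.
    apply Rle_trans with (sumR (seq 1 N) (fun x => sumR (seq 1 N) (fun y =>
       sumR (seq 1 N) (fun u => sumR (seq 1 N) (fun v =>
       w' (Nat.lcm x y) * w' (Nat.lcm u v) * Z))))).
    + apply sumR_le. intros x Hx. apply in_seq1 in Hx. rewrite sumR_swap.
      apply sumR_le. intros y Hy. apply in_seq1 in Hy. rewrite sumR_swap.
      apply sumR_le. intros u Hu. apply in_seq1 in Hu. rewrite sumR_swap.
      apply sumR_le. intros v Hv. apply in_seq1 in Hv.
      pose proof (lcm_pos x y ltac:(lia) ltac:(lia)) as L1.
      pose proof (lcm_pos u v ltac:(lia) ltac:(lia)) as L2.
      pose proof (lcm_pos _ _ L1 L2) as L3.
      eapply Rle_trans; [apply divsum_w; auto|].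
      apply Rmult_le_compat_r; auto. rewrite Wsq by auto.
      assert (Nat.lcm x y <= Nat.lcm (Nat.lcm x y) (Nat.lcm u v))%nat
        by (apply Nat.divide_pos_le; [lia|apply Nat.divide_lcm_l]).
      assert (Nat.lcm u v <= Nat.lcm (Nat.lcm x y) (Nat.lcm u v))%nat
        by (apply Nat.divide_pos_le; [lia|apply Nat.divide_lcm_r]).
      apply Rmult_le_compat; try (left; apply W'p; lia); apply Wdec; lia.
    + rewrite (sumR_ext _ _ (fun x => sumR (seq 1 N) (fun y => w' (Nat.lcm x y) *
          (sumR (seq 1 N) (fun u => sumR (seq 1 N) (fun v => w' (Nat.lcm u v))) * Z)))).
      2: { intros. apply sumR_ext. intros. rewrite <- sumR_scal_r, <- sumR_scal. apply sumR_ext.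
           intros. rewrite <- sumR_scal_r, <- sumR_scal. apply sumR_ext. intros. ring. }
      rewrite (sumR_ext _ _ (fun x => sumR (seq 1 N) (fun y => w' (Nat.lcm x y)) *
          (sumR (seq 1 N) (fun u => sumR (seq 1 N) (fun v => w' (Nat.lcm u v))) * Z)))
          by (intros; apply sumR_scal_r).
      rewrite sumR_scal_r.
      pose proof (lcm_sum w' W'p W'm N) as LS. fold Z' in LS.
      set (S := sumR (seq 1 N) (fun x => sumR (seq 1 N) (fun y => w' (Nat.lcm x y)))) in *.
      assert (0 <= S).
      { apply sumR_nonneg. intros x Hx. apply in_seq1 in Hx. apply sumR_nonneg. intros y Hy.
        apply in_seq1 in Hy. left. apply W'p. apply lcm_pos; lia. }
      replace (Z' ^ 3) with (Z' * Z' * Z') by ring.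
      assert (S * S <= (Z' * Z' * Z') * (Z' * Z' * Z')) by (apply Rmult_le_compat; auto).
      nra.
Qed.
Definition wR (s : R) (n : nat) : R := Rpower (INR n) (- s).

Lemma Rpower_pos x y : 0 < Rpower x y.
Proof. unfold Rpower. apply exp_pos. Qed.

Lemma wR_pos s n : 0 < wR s n.
Proof. apply Rpower_pos. Qed.

Lemma INR_pos n : (1 <= n)%nat -> 0 < INR n.
Proof. intros. apply lt_0_INR. lia. Qed.

Lemma wR_mul s m n : (1 <= m)%nat -> (1 <= n)%nat -> wR s (m * n) = wR s m * wR s n.
Proof.
  intros. unfold wR. rewrite mult_INR. rewrite Rpower_mult_distr; auto; apply INR_pos; auto.
Qed.

Lemma wR_sq s n : wR (2 * s) n = wR s n * wR s n.
Proof. unfold wR. rewrite <- Rpower_plus. f_equal. ring. Qed.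

Lemma Rpower_neg_dec s a b : 0 <= s -> 0 < a <= b -> Rpower b (- s) <= Rpower a (- s).
Proof.
  intros Hs Hab. rewrite !Rpower_Ropp.
  apply Rinv_le_contravar; [apply Rpower_pos|]. apply Rle_Rpower_l; auto.
Qed.

Lemma wR_dec s m n : 0 <= s -> (1 <= m <= n)%nat -> wR s n <= wR s m.
Proof.
  intros. unfold wR. apply Rpower_neg_dec; auto. split; [apply INR_pos; lia|]. apply le_INR; lia.
Qed.

Lemma wR_1 n : (1 <= n)%nat -> wR 1 n = / INR n.
Proof. intros. unfold wR. rewrite Rpower_Ropp, Rpower_1; auto. apply INR_pos; auto. Qed.

Lemma Rpower_1base y : Rpower 1 y = 1.
Proof. unfold Rpower. rewrite ln_1, Rmult_0_r, exp_0; auto. Qed.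

Lemma zeta_bound s N : 1 < s -> sumR (seq 1 N) (wR s) <= s / (s - 1).
Proof.
  intros Hs.
  assert (Main : forall N, (1 <= N)%nat ->
     sumR (seq 1 N) (wR s) <= s / (s - 1) - Rpower (INR N) (1 - s) / (s - 1)).
  { intros M HM. induction M as [|M IH]; [lia|].
    destruct (Nat.eq_dec M 0) as [E|E].
    - subst. cbn [seq sumR fold_right]. unfold wR. replace (INR 1) with 1 by reflexivity.
      rewrite !Rpower_1base. replace (s / (s - 1) - 1 / (s - 1)) with 1 by (field; lra). lra.
    - rewrite seq_S, sumR_app. simpl sumR at 2.
      specialize (IH ltac:(lia)).
      assert (HM0 : 0 < INR M) by (apply INR_pos; lia).
      destruct (MVT_cor2 (fun x => Rpower x (1 - s)) (fun x => (1 - s) * Rpower x (1 - s - 1))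
          (INR M) (INR M + 1)) as [c [Hc1 Hc2]]; [lra| |].
      { intros c Hc. apply derivable_pt_lim_power. lra. }
      replace (1 + M)%nat with (S M) by lia.
      rewrite S_INR.
      replace (1 - s - 1) with (- s) in Hc1 by ring.
      assert (Rpower (INR M + 1) (- s) <= Rpower c (- s)) by (apply Rpower_neg_dec; lra).
      unfold wR at 2. rewrite S_INR.
      apply Rle_trans with (s / (s - 1) - Rpower (INR M) (1 - s) / (s - 1) + Rpower c (- s)).
      { lra. }
      replace (INR M + 1 - INR M) with 1 in Hc1 by ring.
      apply Req_le. field_simplify_eq; [|lra]. nra. }
  destruct N. { simpl. apply Rlt_le. apply Rdiv_lt_0_compat; lra. }
  eapply Rle_trans; [apply Main; lia|].
  assert (0 < Rpower (INR (S N)) (1 - s) / (s - 1)) by (apply Rdiv_lt_0_compat; [apply Rpower_pos|lra]).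
  lra.
Qed.

Lemma harm_bound N : (1 <= N)%nat -> sumR (seq 1 N) (wR 1) <= 1 + ln (INR N).
Proof.
  intros HN. induction N as [|M IH]; [lia|].
  destruct (Nat.eq_dec M 0) as [E|E].
  - subst. simpl. rewrite wR_1 by lia. simpl. rewrite ln_1. lra.
  - rewrite seq_S, sumR_app. simpl sumR at 2.
    specialize (IH ltac:(lia)).
    assert (HM0 : 0 < INR M) by (apply INR_pos; lia).
    destruct (MVT_cor2 ln (fun x => / x) (INR M) (INR M + 1)) as [c [Hc1 Hc2]]; [lra| |].
    { intros c Hc. apply derivable_pt_lim_ln. lra. }
    replace (1 + M)%nat with (S M) by lia.
    rewrite wR_1 by lia. rewrite S_INR.
    replace (INR M + 1 - INR M) with 1 in Hc1 by ring.
    assert (/ (INR M + 1) <= / c) by (apply Rinv_le_contravar; lra).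
    lra.
Qed.
Lemma sq_lemma K x M : (1 <= K)%nat -> (K * K * x = M * M)%nat -> exists w, x = (w * w)%nat.
Proof.
  intros HK H.
  set (g := Nat.gcd K M).
  assert (Hg : g <> 0%nat) by (pose proof (gcd_pos K M HK); unfold g; lia).
  destruct (Nat.gcd_divide_l K M) as [K' HK']. fold g in HK'.
  destruct (Nat.gcd_divide_r K M) as [M' HM']. fold g in HM'.
  assert (Hcop : Nat.gcd (K / g) (M / g) = 1%nat) by (apply Nat.gcd_div_gcd; auto).
  rewrite HK' in Hcop at 1. rewrite HM' in Hcop. rewrite !Nat.div_mul in Hcop by auto.
  assert (E : (K' * K' * x = M' * M')%nat).
  { rewrite HK', HM' in H. apply (Nat.mul_cancel_r _ _ (g * g)); [nia|].
    replace (K' * K' * x * (g * g))%nat with (K' * g * (K' * g) * x)%nat by ring. rewrite H. ring. }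
  assert (D : Nat.divide K' (M' * M')) by (exists (K' * x)%nat; rewrite <- E; ring).
  apply Nat.gauss in D; auto.
  assert (Nat.divide K' 1) by (rewrite <- Hcop; apply Nat.gcd_greatest; auto; apply Nat.divide_refl).
  apply Nat.divide_1_r in H0. subst K'. exists M'. lia.
Qed.

Definition sqf (q : nat) : Prop := forall k, Nat.divide (k * k) q -> k = 1%nat.

Lemma decomp a : (1 <= a)%nat -> exists q m, (1 <= q)%nat /\ (1 <= m)%nat /\ a = (q * (m * m))%nat /\ sqf q.
Proof.
  induction a as [a IH] using lt_wf_ind. intros Ha.
  destruct (classic (sqf a)) as [S|S].
  - exists a, 1%nat. repeat split; auto; lia.
  - unfold sqf in S. apply not_all_ex_not in S as [k Hk].
    apply imply_to_and in Hk as [Hd Hk1].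
    destruct Hd as [a' Ha'].
    assert (k <> 0%nat) by (intro; subst; lia).
    assert (2 <= k)%nat by lia.
    assert (1 <= a')%nat by (destruct a'; lia).
    assert (a' < a)%nat.
    { assert (4 <= k * k)%nat by nia. rewrite Ha'. nia. }
    destruct (IH a') as (q & m & Hq & Hm & E & Sq); [lia|lia|].
    exists q, (k * m)%nat. repeat split; auto; [nia|]. rewrite Ha', E. ring.
Qed.

Lemma sqf_mult q b w : (1 <= q)%nat -> sqf q -> (q * b = w * w)%nat -> exists r, b = (q * (r * r))%nat.
Proof.
  intros Hq S H.
  set (g := Nat.gcd q w).
  assert (Hg : g <> 0%nat) by (pose proof (gcd_pos q w Hq); unfold g; lia).
  destruct (Nat.gcd_divide_l q w) as [q1 Hq1]. fold g in Hq1.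
  destruct (Nat.gcd_divide_r q w) as [w1 Hw1]. fold g in Hw1.
  assert (Hcop : Nat.gcd (q / g) (w / g) = 1%nat) by (apply Nat.gcd_div_gcd; auto).
  rewrite Hq1 in Hcop at 1. rewrite Hw1 in Hcop. rewrite !Nat.div_mul in Hcop by auto.
  assert (E : (q1 * b = g * (w1 * w1))%nat).
  { rewrite Hq1, Hw1 in H. apply (Nat.mul_cancel_r _ _ g); auto.
    replace (q1 * b * g)%nat with (q1 * g * b)%nat by ring. rewrite H. ring. }
  assert (D : Nat.divide q1 (w1 * (w1 * g))) by (exists b; rewrite (Nat.mul_comm b q1), E; ring).
  apply Nat.gauss in D; auto. apply Nat.gauss in D; auto.
  destruct D as [h Hh].
  assert (q1 = 1%nat).
  { apply S. exists h. rewrite Hq1, Hh. ring. }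
  subst q1. exists w1.
  assert (g = q) by lia. rewrite H0 in *.
  apply (Nat.mul_cancel_l _ _ q); [lia|]. rewrite H. rewrite Hw1. ring.
Qed.

Lemma common_q q m b s : (1 <= q)%nat -> (1 <= m)%nat -> sqf q ->
  (q * (m * m) * b = s * s)%nat -> exists r, b = (q * (r * r))%nat.
Proof.
  intros Hq Hm S H.
  destruct (sq_lemma m (q * b) s Hm) as [w Hw].
  { rewrite <- H. ring. }
  apply (sqf_mult q b w); auto.
Qed.

Lemma sqrt_diff_sq x y k : k <> 0%Z -> sqrt (INR x) - sqrt (INR y) = IZR k / 2 ->
  exists w, x = (w * w)%nat.
Proof.
  intros Hk H.
  set (X := sqrt (INR x)) in *. set (Y := sqrt (INR y)) in *.
  assert (HX : X * X = INR x) by (apply sqrt_sqrt, pos_INR).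
  assert (HY : Y * Y = INR y) by (apply sqrt_sqrt, pos_INR).
  set (kr := IZR k) in *.
  assert (Hkr : kr <> 0) by (apply not_0_IZR; auto).
  assert (E1 : X = Y + kr / 2) by lra.
  assert (E2 : kr * Y = INR x - INR y - kr * kr / 4).
  { rewrite <- HX, <- HY, E1. field. }
  assert (E3 : 4 * kr * X = kr * kr + 4 * (INR x - INR y)).
  { rewrite E1. replace (4 * kr * (Y + kr / 2)) with (4 * (kr * Y) + 2 * kr * kr) by field.
    rewrite E2. field. }
  assert (E4 : 16 * kr * kr * INR x = (kr * kr + 4 * (INR x - INR y)) * (kr * kr + 4 * (INR x - INR y))).
  { rewrite <- E3, <- HX. ring. }
  rewrite !INR_IZR_INZ in E4. unfold kr in E4.
  set (M := (k * k + 4 * (Z.of_nat x - Z.of_nat y))%Z).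
  assert (EZ : (4 * k * (4 * k) * Z.of_nat x = M * M)%Z).
  { apply eq_IZR. unfold M. rewrite !mult_IZR, !plus_IZR, !mult_IZR, !minus_IZR.
    rewrite <- E4. simpl. ring. }
  apply (f_equal Z.abs_nat) in EZ. rewrite !Zabs2Nat.inj_mul, Zabs2Nat.id in EZ.
  apply (sq_lemma (Z.abs_nat (4 * k)) x (Z.abs_nat M)); [lia|].
  rewrite !Zabs2Nat.inj_mul. rewrite <- EZ. ring.
Qed.

Lemma sqrt_inj_nat x y : sqrt (INR x) = sqrt (INR y) -> x = y.
Proof.
  intros H. apply INR_eq. apply sqrt_inj; auto using pos_INR.
Qed.

Lemma sum_prod_eq (a b c d : nat) : (a + b = c + d)%nat -> (a * b = c * d)%nat ->
  (a = c /\ b = d) \/ (a = d /\ b = c).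
Proof.
  intros H1 H2.
  assert (E : ((Z.of_nat a - Z.of_nat c) * (Z.of_nat a - Z.of_nat d) = 0)%Z).
  { assert (Z.of_nat b = Z.of_nat c + Z.of_nat d - Z.of_nat a)%Z by lia.
    assert (Z.of_nat a * Z.of_nat b = Z.of_nat c * Z.of_nat d)%Z by (rewrite <- !Nat2Z.inj_mul; f_equal; auto).
    nia. }
  apply Z.mul_eq_0 in E. destruct E; [left|right]; lia.
Qed.

Lemma sqrt_mult_nat x y : sqrt (INR x) * sqrt (INR y) = sqrt (INR (x * y)).
Proof. rewrite mult_INR, sqrt_mult; auto using pos_INR. Qed.

Lemma sqrt_qr q r : sqrt (INR (q * (r * r))) = INR r * sqrt (INR q).
Proof.
  rewrite mult_INR, sqrt_mult by (auto using pos_INR; rewrite mult_INR; apply Rmult_le_pos; apply pos_INR).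
  rewrite mult_INR, sqrt_square by apply pos_INR. ring.
Qed.

Lemma structure a b c d : (1 <= a)%nat -> (1 <= b)%nat -> (1 <= c)%nat -> (1 <= d)%nat ->
  sqrt (INR a) + sqrt (INR b) = sqrt (INR c) + sqrt (INR d) ->
  (a = c /\ b = d) \/ (a = d /\ b = c) \/
  exists q r1 r2 r3 r4, (1 <= q)%nat /\ (1 <= r1)%nat /\ (1 <= r2)%nat /\ (1 <= r3)%nat /\ (1 <= r4)%nat /\
    a = (q * (r1 * r1))%nat /\ b = (q * (r2 * r2))%nat /\ c = (q * (r3 * r3))%nat /\
    d = (q * (r4 * r4))%nat /\ (r1 + r2 = r3 + r4)%nat.
Proof.
  intros Ha Hb Hc Hd H.
  set (A := sqrt (INR a)) in *. set (B := sqrt (INR b)) in *.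
  set (C := sqrt (INR c)) in *. set (D := sqrt (INR d)) in *.
  assert (HA : A * A = INR a) by (apply sqrt_sqrt, pos_INR).
  assert (HB : B * B = INR b) by (apply sqrt_sqrt, pos_INR).
  assert (HC : C * C = INR c) by (apply sqrt_sqrt, pos_INR).
  assert (HD : D * D = INR d) by (apply sqrt_sqrt, pos_INR).
  set (k := (Z.of_nat c + Z.of_nat d - Z.of_nat a - Z.of_nat b)%Z).
  assert (K1 : sqrt (INR (a * b)) - sqrt (INR (c * d)) = IZR k / 2).
  { rewrite <- !sqrt_mult_nat. fold A B C D. unfold k.
    rewrite !minus_IZR, !plus_IZR, <- !INR_IZR_INZ.
    assert ((A + B) * (A + B) = (C + D) * (C + D)) by (rewrite H; auto). nra. }
  set (k' := (Z.of_nat a + Z.of_nat c - Z.of_nat b - Z.of_nat d)%Z).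
  assert (K2 : sqrt (INR (a * c)) - sqrt (INR (b * d)) = IZR k' / 2).
  { rewrite <- !sqrt_mult_nat. fold A B C D. unfold k'.
    rewrite !minus_IZR, !plus_IZR, <- !INR_IZR_INZ.
    assert ((A - C) * (A - C) = (D - B) * (D - B)) by (replace (A - C) with (D - B) by lra; auto). nra. }
  destruct (Z.eq_dec k 0) as [k0|kn0].
  { rewrite k0 in K1. replace (IZR 0 / 2) with 0 in K1 by (simpl; field).
    assert (E1 : (a * b = c * d)%nat) by (apply sqrt_inj_nat; lra).
    assert (E2 : (a + b = c + d)%nat) by (unfold k in k0; lia).
    destruct (sum_prod_eq a b c d E2 E1); auto. }
  destruct (Z.eq_dec k' 0) as [k0|kn0'].
  { rewrite k0 in K2. replace (IZR 0 / 2) with 0 in K2 by (simpl; field).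
    assert (E1 : (a * c = b * d)%nat) by (apply sqrt_inj_nat; lra).
    assert (E2 : (a + c = b + d)%nat) by (unfold k' in k0; lia).
    destruct (sum_prod_eq a c b d E2 E1) as [[E3 E4]|[E3 E4]]; [|right; left; split; lia].
    left. assert (sqrt (INR a) = sqrt (INR c)).
    { unfold A, B, C, D in H. rewrite <- E3, <- E4 in H. lra. }
    apply sqrt_inj_nat in H0. lia. }
  right; right.
  destruct (sqrt_diff_sq _ _ _ kn0 K1) as [s Hs].
  destruct (sqrt_diff_sq _ _ _ kn0' K2) as [u Hu].
  destruct (sqrt_diff_sq (b * d) (a * c) (- k')) as [t Ht].
  { lia. }
  { rewrite opp_IZR. lra. }
  destruct (decomp a Ha) as (q & m & Hq & Hm & Ea & Sq).
  destruct (common_q q m b s Hq Hm Sq) as [r2 Hr2]; [rewrite <- Ea; auto|].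
  destruct (common_q q m c u Hq Hm Sq) as [r3 Hr3]; [rewrite <- Ea; auto|].
  assert (Hr2p : (1 <= r2)%nat) by (destruct r2; lia).
  destruct (common_q q r2 d t Hq Hr2p Sq) as [r4 Hr4]; [rewrite <- Hr2; auto|].
  assert (Hr3p : (1 <= r3)%nat) by (destruct r3; lia).
  assert (Hr4p : (1 <= r4)%nat) by (destruct r4; lia).
  exists q, m, r2, r3, r4. repeat split; auto.
  unfold A, B, C, D in H. rewrite Ea, Hr2, Hr3, Hr4 in H. rewrite !sqrt_qr in H.
  assert (0 < sqrt (INR q)) by (apply sqrt_lt_R0, INR_pos; auto).
  apply INR_eq. rewrite !plus_INR.
  apply (Rmult_eq_reg_r (sqrt (INR q))); [|lra]. lra.
Qed.
Lemma Rpower_32 x : 0 < x -> Rpower x (3/2) = x * sqrt x.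
Proof.
  intros. replace (3/2) with (1 + /2) by field. rewrite Rpower_plus, Rpower_1, Rpower_sqrt; auto.
Qed.
Lemma Rpower_52 x : 0 < x -> Rpower x (5/2) = x * x * sqrt x.
Proof.
  intros. replace (5/2) with (1 + (1 + /2)) by field. rewrite !Rpower_plus, Rpower_1, Rpower_sqrt; auto. ring.
Qed.
Lemma Rpower_34 Y : 0 < Y -> Rpower (Y * Y) (3/4) = Y * sqrt Y.
Proof.
  intros. rewrite <- Rpower_mult_distr by auto. rewrite <- Rpower_plus.
  replace (3/4 + 3/4) with (3/2) by field. apply Rpower_32; auto.
Qed.

Lemma sqrt_nat_pos n : (1 <= n)%nat -> 0 < sqrt (INR n).
Proof. intros. apply sqrt_lt_R0, INR_pos; auto. Qed.
Lemma sqrt_nat_sq n : sqrt (INR n) * sqrt (INR n) = INR n.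
Proof. apply sqrt_sqrt, pos_INR. Qed.

Lemma wR1_s n : (1 <= n)%nat -> wR 1 n = / (sqrt (INR n) * sqrt (INR n)).
Proof. intros. rewrite wR_1, sqrt_nat_sq; auto. Qed.
Lemma wR32_s n : (1 <= n)%nat -> wR (3/2) n = / (sqrt (INR n) * sqrt (INR n) * sqrt (INR n)).
Proof. intros. unfold wR. rewrite Rpower_Ropp, Rpower_32 by (apply INR_pos; auto). rewrite sqrt_nat_sq; auto. Qed.
Lemma wR52_s n : (1 <= n)%nat -> wR (5/2) n =
  / (sqrt (INR n) * sqrt (INR n) * sqrt (INR n) * sqrt (INR n) * sqrt (INR n)).
Proof. intros. unfold wR. rewrite Rpower_Ropp, Rpower_52 by (apply INR_pos; auto).
  f_equal. pose proof (sqrt_nat_sq n) as E. set (s := sqrt (INR n)) in *. rewrite <- E. ring. Qed.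

Definition G (a b : nat) : R :=
  2 * (dd a * dd a) * (dd b * dd b) * (wR 1 a * wR (3/2) b + wR (3/2) a * wR 1 b).

Lemma G_nonneg a b : 0 <= G a b.
Proof.
  unfold G. pose proof (dd_nonneg a). pose proof (dd_nonneg b).
  pose proof (wR_pos 1 a). pose proof (wR_pos (3/2) a). pose proof (wR_pos 1 b). pose proof (wR_pos (3/2) b).
  apply Rmult_le_pos; [|nra]. apply Rmult_le_pos; [|nra]. nra.
Qed.

Lemma diag_val a b X : (1 <= a)%nat -> (1 <= b)%nat -> (X = a * b * a * b \/ X = a * b * b * a)%nat ->
  INR (ndiv a * ndiv b * ndiv a * ndiv b) *
    (sqrt (INR a) + sqrt (INR b) + sqrt (INR a) + sqrt (INR b)) / Rpower (INR X) (3/4) = G a b.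
Proof.
  intros Ha Hb HX.
  assert (HX' : INR X = INR (a * b) * INR (a * b)) by (destruct HX; subst; rewrite !mult_INR; ring).
  rewrite HX', Rpower_34 by (apply INR_pos; nia).
  rewrite <- sqrt_mult_nat, !mult_INR. fold (dd a) (dd b).
  unfold G. rewrite wR1_s, wR32_s, wR1_s, wR32_s by auto.
  pose proof (sqrt_nat_pos a Ha). pose proof (sqrt_nat_pos b Hb).
  pose proof (sqrt_nat_sq a) as Ea. pose proof (sqrt_nat_sq b) as Eb.
  set (sa := sqrt (INR a)) in *. set (sb := sqrt (INR b)) in *.
  rewrite <- Ea, <- Eb. field. split; lra.
Qed.

Lemma diag1 a b : (1 <= a)%nat -> (1 <= b)%nat -> c2_term a b a b <= G a b.
Proof.
  intros. unfold c2_term. destruct Req_EM_T; [|apply G_nonneg].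
  rewrite diag_val; auto. lra.
Qed.

Lemma diag2 a b : (1 <= a)%nat -> (1 <= b)%nat -> c2_term a b b a <= G a b.
Proof.
  intros. unfold c2_term. destruct Req_EM_T; [|apply G_nonneg].
  replace (sqrt (INR a) + sqrt (INR b) + sqrt (INR b) + sqrt (INR a)) with
    (sqrt (INR a) + sqrt (INR b) + sqrt (INR a) + sqrt (INR b)) by ring.
  replace (ndiv a * ndiv b * ndiv b * ndiv a)%nat with (ndiv a * ndiv b * ndiv a * ndiv b)%nat by ring.
  rewrite diag_val; auto. lra.
Qed.

Lemma inner_ineq s1 s2 s4 E4 : 0 < s1 -> 0 < s2 -> 0 < s4 -> 0 <= E4 ->
  E4 * E4 <= 4 * (s4 * s4) -> s1 * s1 + s2 * s2 <= 2 * (s4 * s4) ->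
  2 * (E4 * E4) * (s1 * s1 + s2 * s2) <= 16 * (s1 + s2) * (s4 * s4 * s4).
Proof.
  intros H1 H2 H4 HE HE4 HS.
  pose proof (Rle_0_sqr (s1 - s2)). unfold Rsqr in H.
  assert (A : (s1 + s2) * (s1 + s2) <= 4 * (s4 * s4)) by nra.
  assert (B : s1 + s2 <= 2 * s4) by nra.
  assert (C : s1 * s1 + s2 * s2 <= (s1 + s2) * (2 * s4)) by nra.
  assert (D : 2 * (E4 * E4) * (s1 * s1 + s2 * s2) <= 8 * (s4 * s4) * (s1 * s1 + s2 * s2)) by nra.
  nra.
Qed.

Lemma real_key s1 s2 s3 s4 E1 E2 E3 E4 :
  0 < s1 -> 0 < s2 -> 0 < s3 -> 0 < s4 -> 0 <= E1 -> 0 <= E2 -> 0 <= E3 -> 0 <= E4 ->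
  E3 * E3 <= 4 * (s3 * s3) -> E4 * E4 <= 4 * (s4 * s4) ->
  s1 * s1 + s2 * s2 = s3 * s3 + s4 * s4 ->
  (E1 * E1) * (E2 * E2) * (E3 * E3) * (E4 * E4) * (2 * (s1 * s1 + s2 * s2)) /
     ((s1 * s1 * s1) * (s2 * s2 * s2) * (s3 * s3 * s3) * (s4 * s4 * s4))
  <= 8 * (2 * (E1 * E1) * (E2 * E2) * (/ (s1 * s1) * / (s2 * s2 * s2) + / (s1 * s1 * s1) * / (s2 * s2)))
       * ((E3 * E3) * / (s3 * s3 * s3) + (E4 * E4) * / (s4 * s4 * s4)).
Proof.
  intros H1 H2 H3 H4 G1 G2 G3 G4 HE3 HE4 HS.
  set (F := (E1 * E1) * (E2 * E2) / ((s1 * s1 * s1) * (s2 * s2 * s2))).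
  assert (HF : 0 <= F).
  { unfold F. apply Rmult_le_pos; [nra|]. left. apply Rinv_0_lt_compat.
    repeat apply Rmult_lt_0_compat; auto. }
  assert (EL : (E1 * E1) * (E2 * E2) * (E3 * E3) * (E4 * E4) * (2 * (s1 * s1 + s2 * s2)) /
     ((s1 * s1 * s1) * (s2 * s2 * s2) * (s3 * s3 * s3) * (s4 * s4 * s4))
     = F * ((E3 * E3) * (E4 * E4) * (2 * (s1 * s1 + s2 * s2)) / ((s3 * s3 * s3) * (s4 * s4 * s4)))).
  { unfold F. field. repeat split; lra. }
  assert (ER : 8 * (2 * (E1 * E1) * (E2 * E2) * (/ (s1 * s1) * / (s2 * s2 * s2) + / (s1 * s1 * s1) * / (s2 * s2)))
       * ((E3 * E3) * / (s3 * s3 * s3) + (E4 * E4) * / (s4 * s4 * s4))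
       = F * (16 * (s1 + s2) * ((E3 * E3) * / (s3 * s3 * s3) + (E4 * E4) * / (s4 * s4 * s4)))).
  { unfold F. field. repeat split; lra. }
  rewrite EL, ER. apply Rmult_le_compat_l; auto.
  assert (P3 : 0 < s3 * s3 * s3) by (repeat apply Rmult_lt_0_compat; auto).
  assert (P4 : 0 < s4 * s4 * s4) by (repeat apply Rmult_lt_0_compat; auto).
  assert (Q3 : 0 <= (E3 * E3) * / (s3 * s3 * s3)) by (apply Rmult_le_pos; [nra|left; apply Rinv_0_lt_compat; auto]).
  assert (Q4 : 0 <= (E4 * E4) * / (s4 * s4 * s4)) by (apply Rmult_le_pos; [nra|left; apply Rinv_0_lt_compat; auto]).
  destruct (Rle_or_lt s3 s4) as [L|L].
  -
    pose proof (inner_ineq s1 s2 s4 E4 H1 H2 H4 G4 HE4 ltac:(nra)) as I.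
    apply Rle_trans with (16 * (s1 + s2) * ((E3 * E3) * / (s3 * s3 * s3))); [|nra].
    replace ((E3 * E3) * (E4 * E4) * (2 * (s1 * s1 + s2 * s2)) / ((s3 * s3 * s3) * (s4 * s4 * s4)))
      with (((E3 * E3) * / (s3 * s3 * s3)) * ((2 * (E4 * E4) * (s1 * s1 + s2 * s2)) / (s4 * s4 * s4)))
      by (field; lra).
    replace (16 * (s1 + s2) * ((E3 * E3) * / (s3 * s3 * s3))) with
      (((E3 * E3) * / (s3 * s3 * s3)) * ((16 * (s1 + s2) * (s4 * s4 * s4)) / (s4 * s4 * s4))) by (field; lra).
    apply Rmult_le_compat_l; auto. unfold Rdiv. apply Rmult_le_compat_r; [left; apply Rinv_0_lt_compat; auto|].
    lra.
  - pose proof (inner_ineq s1 s2 s3 E3 H1 H2 H3 G3 HE3 ltac:(nra)) as I.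
    apply Rle_trans with (16 * (s1 + s2) * ((E4 * E4) * / (s4 * s4 * s4))); [|nra].
    replace ((E3 * E3) * (E4 * E4) * (2 * (s1 * s1 + s2 * s2)) / ((s3 * s3 * s3) * (s4 * s4 * s4)))
      with (((E4 * E4) * / (s4 * s4 * s4)) * ((2 * (E3 * E3) * (s1 * s1 + s2 * s2)) / (s3 * s3 * s3)))
      by (field; lra).
    replace (16 * (s1 + s2) * ((E4 * E4) * / (s4 * s4 * s4))) with
      (((E4 * E4) * / (s4 * s4 * s4)) * ((16 * (s1 + s2) * (s3 * s3 * s3)) / (s3 * s3 * s3))) by (field; lra).
    apply Rmult_le_compat_l; auto. unfold Rdiv. apply Rmult_le_compat_r; [left; apply Rinv_0_lt_compat; auto|].
    lra.
Qed.
Definition Bq (q : nat) : R := (dd q * dd q) * (dd q * dd q) * wR (5/2) q.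

Lemma Bq_nonneg q : 0 <= Bq q.
Proof. unfold Bq. pose proof (dd_nonneg q). pose proof (wR_pos (5/2) q).
  apply Rmult_le_pos; [|lra]. apply Rmult_le_pos; nra. Qed.

Lemma dd_qrr q r : (1 <= q)%nat -> (1 <= r)%nat -> dd (q * (r * r)) <= dd q * (dd r * dd r).
Proof.
  intros. eapply Rle_trans; [apply dd_submult; nia|].
  apply Rmult_le_compat_l; [apply dd_nonneg|]. apply dd_submult; lia.
Qed.

Lemma nondiag_term q r1 r2 r3 r4 : (1 <= q)%nat -> (1 <= r1)%nat -> (1 <= r2)%nat ->
  (1 <= r3)%nat -> (1 <= r4)%nat -> (r1 + r2 = r3 + r4)%nat ->
  c2_term (q * (r1 * r1)) (q * (r2 * r2)) (q * (r3 * r3)) (q * (r4 * r4)) <=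
  Bq q * (8 * G r1 r2 * (dd r3 * dd r3 * wR (3/2) r3 + dd r4 * dd r4 * wR (3/2) r4)).
Proof.
  intros Hq H1 H2 H3 H4 HS.
  assert (RHS0 : 0 <= Bq q * (8 * G r1 r2 * (dd r3 * dd r3 * wR (3/2) r3 + dd r4 * dd r4 * wR (3/2) r4))).
  { apply Rmult_le_pos; [apply Bq_nonneg|]. apply Rmult_le_pos; [pose proof (G_nonneg r1 r2); lra|].
    pose proof (dd_nonneg r3). pose proof (dd_nonneg r4). pose proof (wR_pos (3/2) r3).
    pose proof (wR_pos (3/2) r4). nra. }
  unfold c2_term. destruct Req_EM_T as [_|_]; [|auto].
  set (Yn := (q * q * (r1 * r2 * r3 * r4))%nat).
  replace (q * (r1 * r1) * (q * (r2 * r2)) * (q * (r3 * r3)) * (q * (r4 * r4)))%nat with (Yn * Yn)%nat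
    by (unfold Yn; ring).
  rewrite (mult_INR Yn Yn), Rpower_34 by (apply INR_pos; unfold Yn; nia).
  rewrite !sqrt_qr.
  unfold Yn. rewrite !mult_INR.
  fold (dd (q * (r1 * r1))) (dd (q * (r2 * r2))) (dd (q * (r3 * r3))) (dd (q * (r4 * r4))).
  unfold Bq, G. rewrite wR52_s, !wR1_s, !wR32_s by auto.
  pose proof (sqrt_nat_pos q Hq) as Pt. pose proof (sqrt_nat_pos r1 H1) as P1.
  pose proof (sqrt_nat_pos r2 H2) as P2. pose proof (sqrt_nat_pos r3 H3) as P3.
  pose proof (sqrt_nat_pos r4 H4) as P4.
  pose proof (sqrt_nat_sq q) as Eq. pose proof (sqrt_nat_sq r1) as E1.
  pose proof (sqrt_nat_sq r2) as E2. pose proof (sqrt_nat_sq r3) as E3. pose proof (sqrt_nat_sq r4) as E4.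
  assert (HS' : INR r1 + INR r2 = INR r3 + INR r4) by (rewrite <- !plus_INR; f_equal; auto).
  pose proof (dd_qrr q r1 Hq H1) as A1. pose proof (dd_qrr q r2 Hq H2) as A2.
  pose proof (dd_qrr q r3 Hq H3) as A3. pose proof (dd_qrr q r4 Hq H4) as A4.
  pose proof (dd_nonneg (q * (r1 * r1))) as N1. pose proof (dd_nonneg (q * (r2 * r2))) as N2.
  pose proof (dd_nonneg (q * (r3 * r3))) as N3. pose proof (dd_nonneg (q * (r4 * r4))) as N4.
  pose proof (dd_sq_le r3 H3) as D3. pose proof (dd_sq_le r4 H4) as D4.
  pose proof (dd_nonneg q) as Dq0. pose proof (dd_nonneg r1) as G1. pose proof (dd_nonneg r2) as G2.
  pose proof (dd_nonneg r3) as G3. pose proof (dd_nonneg r4) as G4.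
  set (a1 := dd (q * (r1 * r1))) in *. set (a2 := dd (q * (r2 * r2))) in *.
  set (a3 := dd (q * (r3 * r3))) in *. set (a4 := dd (q * (r4 * r4))) in *.
  set (Dq := dd q) in *. set (e1 := dd r1) in *. set (e2 := dd r2) in *.
  set (e3 := dd r3) in *. set (e4 := dd r4) in *.
  set (t := sqrt (INR q)) in *. set (s1 := sqrt (INR r1)) in *. set (s2 := sqrt (INR r2)) in *.
  set (s3 := sqrt (INR r3)) in *. set (s4 := sqrt (INR r4)) in *.
  rewrite <- Eq, <- E1, <- E2, <- E3, <- E4 in *.
  assert (SQ : sqrt (t * t * (t * t) * (s1 * s1 * (s2 * s2) * (s3 * s3) * (s4 * s4))) = t * t * (s1 * s2 * s3 * s4)).
  { replace (t * t * (t * t) * (s1 * s1 * (s2 * s2) * (s3 * s3) * (s4 * s4))) with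
      ((t * t * (s1 * s2 * s3 * s4)) * (t * t * (s1 * s2 * s3 * s4))) by ring.
    apply sqrt_square. left. repeat apply Rmult_lt_0_compat; auto. }
  rewrite SQ.
  assert (L : a1 * a2 * a3 * a4 * (s1 * s1 * t + s2 * s2 * t + s3 * s3 * t + s4 * s4 * t) /
     (t * t * (t * t) * (s1 * s1 * (s2 * s2) * (s3 * s3) * (s4 * s4)) * (t * t * (s1 * s2 * s3 * s4)))
     = (/ (t * t * t * t * t)) * (a1 * a2 * a3 * a4 * (2 * (s1 * s1 + s2 * s2)) /
        ((s1 * s1 * s1) * (s2 * s2 * s2) * (s3 * s3 * s3) * (s4 * s4 * s4)))).
  { assert (HX : s1 * s1 * t + s2 * s2 * t + s3 * s3 * t + s4 * s4 * t =
       (s1 * s1 + s2 * s2) * t + (s3 * s3 + s4 * s4) * t) by ring.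
    rewrite HX, <- HS'. field. repeat split; lra. }
  rewrite L. clear L.
  assert (Pt5 : 0 < / (t * t * t * t * t)) by (apply Rinv_0_lt_compat; repeat apply Rmult_lt_0_compat; auto).
  assert (Ps : 0 < (s1 * s1 * s1) * (s2 * s2 * s2) * (s3 * s3 * s3) * (s4 * s4 * s4))
    by (repeat apply Rmult_lt_0_compat; auto).
  assert (Aprod : a1 * a2 * a3 * a4 <= (Dq * Dq) * (Dq * Dq) * ((e1 * e1) * (e2 * e2) * (e3 * e3) * (e4 * e4))).
  { apply Rle_trans with ((Dq * (e1 * e1)) * (Dq * (e2 * e2)) * (Dq * (e3 * e3)) * (Dq * (e4 * e4))); [|nra].
    repeat apply Rmult_le_compat; auto; repeat apply Rmult_le_pos; auto. }
  pose proof (real_key s1 s2 s3 s4 e1 e2 e3 e4 P1 P2 P3 P4 G1 G2 G3 G4 D3 D4 ltac:(lra)) as K.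
  apply Rle_trans with ((/ (t * t * t * t * t)) * ((Dq * Dq) * (Dq * Dq)) *
     ((e1 * e1) * (e2 * e2) * (e3 * e3) * (e4 * e4) * (2 * (s1 * s1 + s2 * s2)) /
        ((s1 * s1 * s1) * (s2 * s2 * s2) * (s3 * s3 * s3) * (s4 * s4 * s4)))).
  { set (X := 2 * (s1 * s1 + s2 * s2)). set (P := s1 * s1 * s1 * (s2 * s2 * s2) * (s3 * s3 * s3) * (s4 * s4 * s4)) in *.
    set (T5 := / (t * t * t * t * t)) in *.
    assert (HXP : 0 <= T5 * (X / P)) by (unfold X; apply Rmult_le_pos; [lra|]; unfold Rdiv; apply Rmult_le_pos; [nra|left; apply Rinv_0_lt_compat; auto]).
    replace (T5 * (a1 * a2 * a3 * a4 * X / P)) with ((T5 * (X / P)) * (a1 * a2 * a3 * a4)) by (field; lra).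
    replace (T5 * (Dq * Dq * (Dq * Dq)) * (e1 * e1 * (e2 * e2) * (e3 * e3) * (e4 * e4) * X / P)) with
      ((T5 * (X / P)) * (Dq * Dq * (Dq * Dq) * (e1 * e1 * (e2 * e2) * (e3 * e3) * (e4 * e4)))) by (field; lra).
    apply Rmult_le_compat_l; auto. }
  eapply Rle_trans; [apply Rmult_le_compat_l; [|exact K]; apply Rmult_le_pos; nra|].
  apply Req_le. field. repeat split; lra.
Qed.
Definition guard (p : bool) (y : R) : R := if p then y else 0.

Lemma guard_nonneg p y : 0 <= y -> 0 <= guard p y.
Proof. destruct p; simpl; lra. Qed.

Lemma sum_guard l p f : sumR l (fun x => guard p (f x)) = guard p (sumR l f).
Proof. destruct p; simpl; auto. apply sumR_zero. Qed.

Lemma guard_le p y y' : y <= y' -> guard p y <= guard p y'.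
Proof. destruct p; simpl; lra. Qed.

Lemma gsum0 N m Y : 0 <= Y -> sumR (seq 1 N) (fun x => guard (Nat.eqb x m) Y) <= Y.
Proof.
  intros. apply sumR_unique; [apply seq_NoDup|auto|]. intros a b _ _ Ha Hb.
  apply Nat.eqb_eq in Ha, Hb. lia.
Qed.

Definition V (r : nat) : R := dd r * dd r * wR (3/2) r.

Lemma V_nonneg r : 0 <= V r.
Proof. unfold V. pose proof (dd_nonneg r). pose proof (wR_pos (3/2) r). nra. Qed.

Definition Fq (q r1 r2 r3 r4 : nat) : R :=
  guard (Nat.eqb (r1 + r2) (r3 + r4)) (Bq q * (8 * G r1 r2 * (V r3 + V r4))).

Lemma Fq_nonneg q r1 r2 r3 r4 : 0 <= Fq q r1 r2 r3 r4.
Proof.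
  unfold Fq. apply guard_nonneg. apply Rmult_le_pos; [apply Bq_nonneg|].
  pose proof (G_nonneg r1 r2). pose proof (V_nonneg r3). pose proof (V_nonneg r4). nra.
Qed.

Definition Eterm N (a b c d : nat) : R :=
  sumR (seq 1 N) (fun q => sumR (seq 1 N) (fun r1 => sumR (seq 1 N) (fun r2 =>
  sumR (seq 1 N) (fun r3 => sumR (seq 1 N) (fun r4 =>
    guard (Nat.eqb a (q * (r1 * r1))) (guard (Nat.eqb b (q * (r2 * r2)))
    (guard (Nat.eqb c (q * (r3 * r3))) (guard (Nat.eqb d (q * (r4 * r4))) (Fq q r1 r2 r3 r4))))))))).

Lemma ge1_sq q r : (1 <= q)%nat -> (r <= q * (r * r))%nat.
Proof. intros. destruct r; nia. Qed.

Lemma pointwise N a b c d : (1 <= a <= N)%nat -> (1 <= b <= N)%nat -> (1 <= c <= N)%nat -> (1 <= d <= N)%nat ->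
  c2_term a b c d <= guard (Nat.eqb a c && Nat.eqb b d) (G a b) + guard (Nat.eqb a d && Nat.eqb b c) (G a b)
                     + Eterm N a b c d.
Proof.
  intros Ha Hb Hc Hd.
  assert (P1 : 0 <= guard (Nat.eqb a c && Nat.eqb b d) (G a b)) by (apply guard_nonneg, G_nonneg).
  assert (P2 : 0 <= guard (Nat.eqb a d && Nat.eqb b c) (G a b)) by (apply guard_nonneg, G_nonneg).
  assert (P3 : 0 <= Eterm N a b c d).
  { unfold Eterm. repeat (apply sumR_nonneg; intros).
    repeat first [apply Fq_nonneg | apply guard_nonneg]. }
  destruct (Req_EM_T (sqrt (INR a) + sqrt (INR b)) (sqrt (INR c) + sqrt (INR d))) as [H|H].
  2: { unfold c2_term. destruct Req_EM_T; [contradiction|lra]. }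
  destruct (structure a b c d ltac:(lia) ltac:(lia) ltac:(lia) ltac:(lia) H) as
    [[-> ->]|[[-> ->]|(q & r1 & r2 & r3 & r4 & Hq & H1 & H2 & H3 & H4 & Ea & Eb & Ec & Ed & HS)]].
  - rewrite !Nat.eqb_refl in P1 |- *. simpl andb. unfold guard at 1. pose proof (diag1 c d ltac:(lia) ltac:(lia)). lra.
  - rewrite !Nat.eqb_refl in P2 |- *. simpl andb. unfold guard at 2.
    pose proof (diag2 d c ltac:(lia) ltac:(lia)). lra.
  - assert (T : c2_term a b c d <= Eterm N a b c d).
    { subst a b c d. eapply Rle_trans; [apply (nondiag_term q r1 r2 r3 r4); auto|].
      unfold Eterm.
      pose proof (ge1_sq q r1 Hq). pose proof (ge1_sq q r2 Hq).
      pose proof (ge1_sq q r3 Hq). pose proof (ge1_sq q r4 Hq).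
      assert (q <= q * (r1 * r1))%nat.
      { assert (Hr : (1 <= r1 * r1)%nat) by (apply (Nat.mul_le_mono 1 r1 1 r1); lia).
        pose proof (Nat.mul_le_mono_l 1 (r1 * r1) q Hr). lia. }
      eapply Rle_trans; [|apply (sumR_point _ _ q); [apply in_seq1; lia|intros;
        repeat (apply sumR_nonneg; intros); repeat first [apply Fq_nonneg | apply guard_nonneg]]].
      eapply Rle_trans; [|apply (sumR_point _ _ r1); [apply in_seq1; lia|intros;
        repeat (apply sumR_nonneg; intros); repeat first [apply Fq_nonneg | apply guard_nonneg]]].
      eapply Rle_trans; [|apply (sumR_point _ _ r2); [apply in_seq1; lia|intros;
        repeat (apply sumR_nonneg; intros); repeat first [apply Fq_nonneg | apply guard_nonneg]]].
      eapply Rle_trans; [|apply (sumR_point _ _ r3); [apply in_seq1; lia|intros;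
        repeat (apply sumR_nonneg; intros); repeat first [apply Fq_nonneg | apply guard_nonneg]]].
      eapply Rle_trans; [|apply (sumR_point _ _ r4); [apply in_seq1; lia|intros;
        repeat (apply sumR_nonneg; intros); repeat first [apply Fq_nonneg | apply guard_nonneg]]].
      rewrite !Nat.eqb_refl. unfold Fq. simpl. rewrite (proj2 (Nat.eqb_eq _ _) HS). simpl. unfold V. lra. }
    lra.
Qed.
Section Assembly.
Variable N : nat.
Let L := seq 1 N.

Definition S4 (f : nat -> nat -> nat -> nat -> R) : R :=
  sumR L (fun a => sumR L (fun b => sumR L (fun c => sumR L (fun d => f a b c d)))).
Definition S5 (f : nat -> nat -> nat -> nat -> nat -> R) : R :=
  sumR L (fun q => sumR L (fun r1 => sumR L (fun r2 => sumR L (fun r3 => sumR L (fun r4 => f q r1 r2 r3 r4))))).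

Lemma S4_le f g : (forall a b c d, (1 <= a <= N)%nat -> (1 <= b <= N)%nat -> (1 <= c <= N)%nat ->
  (1 <= d <= N)%nat -> f a b c d <= g a b c d) -> S4 f <= S4 g.
Proof.
  intros H. unfold S4. apply sumR_le; intros a Ha; apply in_seq1 in Ha.
  apply sumR_le; intros b Hb; apply in_seq1 in Hb.
  apply sumR_le; intros c Hc; apply in_seq1 in Hc.
  apply sumR_le; intros d Hd; apply in_seq1 in Hd. auto.
Qed.

Lemma S4_plus f g : S4 (fun a b c d => f a b c d + g a b c d) = S4 f + S4 g.
Proof.
  unfold S4. rewrite <- sumR_plus. apply sumR_ext; intros.
  rewrite <- sumR_plus. apply sumR_ext; intros.
  rewrite <- sumR_plus. apply sumR_ext; intros.
  rewrite <- sumR_plus. auto.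
Qed.

Lemma S5_le f g : (forall q r1 r2 r3 r4, f q r1 r2 r3 r4 <= g q r1 r2 r3 r4) -> S5 f <= S5 g.
Proof.
  intros H. unfold S5. repeat (apply sumR_le; intros). auto.
Qed.

Lemma swap5 (l : list nat) (H : nat -> nat -> nat -> nat -> nat -> nat -> R) :
  sumR l (fun x => S5 (H x)) = S5 (fun q r1 r2 r3 r4 => sumR l (fun x => H x q r1 r2 r3 r4)).
Proof.
  unfold S5. rewrite sumR_swap. apply sumR_ext; intros.
  rewrite sumR_swap. apply sumR_ext; intros.
  rewrite sumR_swap. apply sumR_ext; intros.
  rewrite sumR_swap. apply sumR_ext; intros.
  rewrite sumR_swap. auto.
Qed.

Lemma guard_and p1 p2 y : guard (p1 && p2) y = guard p1 (guard p2 y).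
Proof. destruct p1, p2; reflexivity. Qed.

Lemma gsum1 m Y : 0 <= Y -> sumR L (fun x => guard (Nat.eqb m x) Y) <= Y.
Proof.
  intros. rewrite (sumR_ext _ _ (fun x => guard (Nat.eqb x m) Y)) by (intros; rewrite Nat.eqb_sym; auto).
  apply gsum0; auto.
Qed.

Lemma D1_bound : S4 (fun a b c d => guard (Nat.eqb a c && Nat.eqb b d) (G a b)) <= sumR L (fun a => sumR L (fun b => G a b)).
Proof.
  unfold S4. apply sumR_le; intros a _. apply sumR_le; intros b _.
  rewrite (sumR_ext _ _ (fun c => guard (Nat.eqb a c) (sumR L (fun d => guard (Nat.eqb b d) (G a b))))).
  2: { intros. rewrite <- sum_guard. apply sumR_ext. intros. apply guard_and. }
  eapply Rle_trans; [apply sumR_le; intros c _; apply guard_le; apply gsum1; apply G_nonneg|].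
  apply gsum1, G_nonneg.
Qed.

Lemma D2_bound : S4 (fun a b c d => guard (Nat.eqb a d && Nat.eqb b c) (G a b)) <= sumR L (fun a => sumR L (fun b => G a b)).
Proof.
  unfold S4. apply sumR_le; intros a _. apply sumR_le; intros b _.
  rewrite (sumR_ext _ _ (fun c => guard (Nat.eqb b c) (sumR L (fun d => guard (Nat.eqb a d) (G a b))))).
  2: { intros. rewrite <- sum_guard. apply sumR_ext. intros. rewrite Bool.andb_comm. apply guard_and. }
  eapply Rle_trans; [apply sumR_le; intros c _; apply guard_le; apply gsum1; apply G_nonneg|].
  apply gsum1, G_nonneg.
Qed.

Lemma E_bound : S4 (fun a b c d => Eterm N a b c d) <= S5 Fq.
Proof.
  unfold S4, Eterm.
  rewrite (sumR_ext _ _ (fun a => sumR L (fun b => sumR L (fun c => S5 (fun q r1 r2 r3 r4 =>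
     sumR L (fun d => guard (Nat.eqb a (q * (r1 * r1))) (guard (Nat.eqb b (q * (r2 * r2)))
    (guard (Nat.eqb c (q * (r3 * r3))) (guard (Nat.eqb d (q * (r4 * r4))) (Fq q r1 r2 r3 r4)))))))))).
  2: { intros. apply sumR_ext; intros. apply sumR_ext; intros. apply swap5. }
  rewrite (sumR_ext _ _ (fun a => sumR L (fun b => S5 (fun q r1 r2 r3 r4 => sumR L (fun c =>
     sumR L (fun d => guard (Nat.eqb a (q * (r1 * r1))) (guard (Nat.eqb b (q * (r2 * r2)))
    (guard (Nat.eqb c (q * (r3 * r3))) (guard (Nat.eqb d (q * (r4 * r4))) (Fq q r1 r2 r3 r4)))))))))).
  2: { intros. apply sumR_ext; intros. apply swap5. }
  rewrite (sumR_ext _ _ (fun a => S5 (fun q r1 r2 r3 r4 => sumR L (fun b => sumR L (fun c =>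
     sumR L (fun d => guard (Nat.eqb a (q * (r1 * r1))) (guard (Nat.eqb b (q * (r2 * r2)))
    (guard (Nat.eqb c (q * (r3 * r3))) (guard (Nat.eqb d (q * (r4 * r4))) (Fq q r1 r2 r3 r4)))))))))).
  2: { intros. apply swap5. }
  rewrite swap5. apply S5_le. intros q r1 r2 r3 r4.
  pose proof (Fq_nonneg q r1 r2 r3 r4) as F0.
  set (Y := Fq q r1 r2 r3 r4) in *.
  set (m1 := (q * (r1 * r1))%nat). set (m2 := (q * (r2 * r2))%nat).
  set (m3 := (q * (r3 * r3))%nat). set (m4 := (q * (r4 * r4))%nat).
  apply Rle_trans with (sumR L (fun a => sumR L (fun b => sumR L (fun c =>
      guard (Nat.eqb a m1) (guard (Nat.eqb b m2) (guard (Nat.eqb c m3) Y)))))).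
  { apply sumR_le; intros a _. apply sumR_le; intros b _. apply sumR_le; intros c _.
    unfold guard. destruct (Nat.eqb a m1), (Nat.eqb b m2), (Nat.eqb c m3); simpl;
      try (rewrite sumR_zero; lra). apply gsum0; auto. }
  apply Rle_trans with (sumR L (fun a => sumR L (fun b =>
      guard (Nat.eqb a m1) (guard (Nat.eqb b m2) Y)))).
  { apply sumR_le; intros a _. apply sumR_le; intros b _.
    unfold guard. destruct (Nat.eqb a m1), (Nat.eqb b m2); simpl;
      try (rewrite sumR_zero; lra). apply gsum0; auto. }
  apply Rle_trans with (sumR L (fun a => guard (Nat.eqb a m1) Y)).
  { apply sumR_le; intros a _.
    unfold guard. destruct (Nat.eqb a m1); simpl;
      try (rewrite sumR_zero; lra). apply gsum0; auto. }
  apply gsum0; auto.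
Qed.

Definition SV := sumR L V.
Definition SG := sumR L (fun a => sumR L (fun b => G a b)).
Definition SB := sumR L Bq.

Lemma SV_nonneg : 0 <= SV.
Proof. apply sumR_nonneg; intros; apply V_nonneg. Qed.

Lemma F_bound : S5 Fq <= 16 * SV * SB * SG.
Proof.
  apply Rle_trans with (sumR L (fun q => sumR L (fun r1 => sumR L (fun r2 => 2 * (Bq q * (8 * G r1 r2)) * SV)))).
  - unfold S5. apply sumR_le; intros q _. apply sumR_le; intros r1 _. apply sumR_le; intros r2 _.
    set (X := Bq q * (8 * G r1 r2)).
    assert (HX : 0 <= X) by (unfold X; apply Rmult_le_pos; [apply Bq_nonneg|]; pose proof (G_nonneg r1 r2); lra).
    unfold Fq. fold X.
    rewrite (sumR_ext _ _ (fun r3 => sumR L (fun r4 => guard (Nat.eqb (r1 + r2) (r3 + r4)) (X * V r3)) +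
                                     sumR L (fun r4 => guard (Nat.eqb (r1 + r2) (r3 + r4)) (X * V r4)))).
    2: { intros. rewrite <- sumR_plus. apply sumR_ext. intros. unfold guard.
         unfold X. destruct (Nat.eqb (r1 + r2) (x + x0)); ring. }
    rewrite sumR_plus. rewrite (sumR_swap L L (fun r3 r4 => guard (Nat.eqb (r1 + r2) (r3 + r4)) (X * V r4))).
    assert (A1 : sumR L (fun r3 => sumR L (fun r4 => guard (Nat.eqb (r1 + r2) (r3 + r4)) (X * V r3))) <= X * SV).
    { unfold SV. rewrite <- sumR_scal. apply sumR_le; intros r3 _.
      apply sumR_unique; [apply seq_NoDup| pose proof (V_nonneg r3); nra |].
      intros u v _ _ Hu Hv. apply Nat.eqb_eq in Hu, Hv. lia. }
    assert (A2 : sumR L (fun r4 => sumR L (fun r3 => guard (Nat.eqb (r1 + r2) (r3 + r4)) (X * V r4))) <= X * SV).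
    { unfold SV. rewrite <- sumR_scal. apply sumR_le; intros r4 _.
      apply sumR_unique; [apply seq_NoDup| pose proof (V_nonneg r4); nra |].
      intros u v _ _ Hu Hv. apply Nat.eqb_eq in Hu, Hv. lia. }
    lra.
  - apply Req_le. unfold SB, SG.
    rewrite (sumR_ext _ _ (fun q => Bq q * (16 * SV * sumR L (fun a => sumR L (fun b => G a b))))).
    + rewrite sumR_scal_r. ring.
    + intros q _.
      replace (Bq q * (16 * SV * sumR L (fun a => sumR L (fun b => G a b)))) with
        ((Bq q * (16 * SV)) * sumR L (fun a => sumR L (fun b => G a b))) by ring.
      rewrite <- sumR_scal. apply sumR_ext; intros r1 _.
      rewrite <- sumR_scal. apply sumR_ext; intros r2 _. ring.
Qed.

Definition X1 := sumR L (fun a => dd a * dd a * wR 1 a).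

Lemma SG_eq : SG = 4 * X1 * SV.
Proof.
  unfold SG, X1, SV, V, G.
  set (u := fun a => dd a * dd a * wR 1 a). set (v := fun a => dd a * dd a * wR (3/2) a).
  rewrite (sumR_ext _ _ (fun a => sumR L (fun b => 2 * (u a * v b) + 2 * (v a * u b)))).
  2: { intros. apply sumR_ext. intros. unfold u, v. ring. }
  rewrite (sumR_ext _ _ (fun a => 2 * (u a * sumR L v) + 2 * (v a * sumR L u))).
  2: { intros. rewrite sumR_plus, !sumR_scal, <- !sumR_scal. reflexivity. }
  rewrite sumR_plus, !sumR_scal, !sumR_scal_r. fold (sumR L u) (sumR L v). ring.
Qed.

Lemma c2_bound : S4 c2_term <= SG * (2 + 16 * SV * SB).
Proof.
  apply Rle_trans with (S4 (fun a b c d => (guard (Nat.eqb a c && Nat.eqb b d) (G a b) +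
     guard (Nat.eqb a d && Nat.eqb b c) (G a b)) + Eterm N a b c d)).
  { apply S4_le. intros. apply pointwise; auto. }
  rewrite S4_plus, S4_plus.
  pose proof D1_bound. pose proof D2_bound. pose proof E_bound. pose proof F_bound.
  fold SG in H, H0.
  replace (SG * (2 + 16 * SV * SB)) with (SG + SG + 16 * SV * SB * SG) by ring.
  change (S4 (Eterm N)) with (S4 (fun a b c d => Eterm N a b c d)). lra.
Qed.
End Assembly.
Lemma ln_le x y : 0 < x -> x <= y -> ln x <= ln y.
Proof.
  intros Hx Hxy. destruct (Rle_lt_or_eq_dec _ _ Hxy) as [H|H].
  - left. apply ln_increasing; auto.
  - subst. lra.
Qed.

Lemma c2_term_nonneg a b c d : 0 <= c2_term a b c d.
Proof.
  unfold c2_term. destruct Req_EM_T; [|lra].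
  unfold Rdiv. apply Rmult_le_pos; [apply Rmult_le_pos|].
  - apply pos_INR.
  - pose proof (sqrt_pos (INR a)). pose proof (sqrt_pos (INR b)).
    pose proof (sqrt_pos (INR c)). pose proof (sqrt_pos (INR d)). lra.
  - left. apply Rinv_0_lt_compat, Rpower_pos.
Qed.

Lemma pow4_le x y : 0 <= x -> x <= y -> x * x * x * x <= y ^ 4.
Proof. intros. simpl. assert (0 <= x * x) by nra. assert (x * x <= y * y) by nra. nra. Qed.

Lemma c2_poly N : (1 <= N)%nat ->
  S4 N c2_term <= 4 * 81 * (2 + 16 * 81 * (5/3 * 5^6)) * (1 + ln (INR N)) ^ 4.
Proof.
  intros HN.
  pose proof (c2_bound N) as HB. rewrite SG_eq in HB.
  assert (HX1 : X1 N <= (1 + ln (INR N)) ^ 4).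
  { unfold X1. eapply Rle_trans; [apply moment2; [intros; apply wR_pos|apply wR_mul]|].
    apply pow4_le; [apply Z_nonneg; intros; apply wR_pos|]. apply harm_bound; auto. }
  assert (X1p : 0 <= X1 N).
  { unfold X1. apply sumR_nonneg. intros. pose proof (dd_nonneg x). pose proof (wR_pos 1 x). nra. }
  assert (HSV : SV N <= 81).
  { unfold SV, V. eapply Rle_trans; [apply moment2; [intros; apply wR_pos|apply wR_mul]|].
    replace 81 with (3 ^ 4) by ring. apply pow4_le; [apply Z_nonneg; intros; apply wR_pos|].
    eapply Rle_trans; [apply zeta_bound; lra|]. apply Req_le. field. }
  pose proof (SV_nonneg N) as SVp.
  assert (HSB : SB N <= 5/3 * 5^6).
  { unfold SB, Bq. eapply Rle_trans; [apply (moment4 (wR (5/2)) (wR (5/4)))|].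
    - intros; apply wR_pos.
    - apply wR_mul.
    - intros; apply wR_pos.
    - apply wR_mul.
    - intros. replace (5/2) with (2 * (5/4)) by field. apply wR_sq.
    - intros. apply wR_dec; [lra|lia].
    - assert (Z1 : sumR (seq 1 N) (wR (5/2)) <= 5/3).
      { eapply Rle_trans; [apply zeta_bound; lra|]. apply Req_le. field. }
      assert (Z2 : sumR (seq 1 N) (wR (5/4)) <= 5).
      { eapply Rle_trans; [apply zeta_bound; lra|]. apply Req_le. field. }
      assert (Z10 : 0 <= sumR (seq 1 N) (wR (5/2))) by (apply Z_nonneg; intros; apply wR_pos).
      assert (Z20 : 0 <= sumR (seq 1 N) (wR (5/4))) by (apply Z_nonneg; intros; apply wR_pos).
      assert (P3 : sumR (seq 1 N) (wR (5/4)) ^ 3 <= 5 ^ 3) by (apply pow_incr; auto).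
      assert (0 <= sumR (seq 1 N) (wR (5/4)) ^ 3) by (apply pow_le; auto).
      replace (5 ^ 6) with (5 ^ 3 * 5 ^ 3) by ring.
      apply Rmult_le_compat; auto.
      + apply Rmult_le_pos; auto.
      + apply Rmult_le_compat; auto. }
  assert (SBp : 0 <= SB N) by (apply sumR_nonneg; intros; apply Bq_nonneg).
  eapply Rle_trans; [exact HB|].
  assert (HA : 2 + 16 * SV N * SB N <= 2 + 16 * 81 * (5/3 * 5^6)).
  { assert (SV N * SB N <= 81 * (5/3 * 5^6)) by (apply Rmult_le_compat; auto). lra. }
  assert (0 <= 2 + 16 * SV N * SB N) by nra.
  assert (4 * X1 N * SV N <= 4 * (1 + ln (INR N)) ^ 4 * 81).
  { apply Rmult_le_compat; auto; [nra|nra]. }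
  assert (0 <= 4 * X1 N * SV N) by nra.
  apply Rle_trans with ((4 * (1 + ln (INR N)) ^ 4 * 81) * (2 + 16 * 81 * (5/3 * 5^6))).
  - apply Rmult_le_compat; auto.
  - apply Req_le. ring.
Qed.

Theorem lemma4p3 :
  exists C : R, 0 < C /\
    forall z : R, 10 <= z -> Rabs (c2 z) <= C * (ln z) ^ 4.
Proof.
  exists (16 * (4 * 81 * (2 + 16 * 81 * (5/3 * 5^6)))). split; [lra|].
  intros z Hz.
  set (N := nfloor z).
  assert (E : c2 z = S4 N c2_term) by reflexivity.
  assert (Hnn : 0 <= S4 N c2_term).
  { unfold S4. repeat (apply sumR_nonneg; intros). apply c2_term_nonneg. }
  rewrite E, Rabs_right by lra.
  destruct (base_Int_part z) as [B1 B2].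
  assert (HI : (0 <= Int_part z)%Z).
  { apply le_IZR. lra. }
  assert (HN : INR N = IZR (Int_part z)).
  { unfold N, nfloor. rewrite INR_IZR_INZ, Z2Nat.id; auto. }
  assert (HN1 : (1 <= N)%nat).
  { apply INR_le. rewrite HN. simpl. lra. }
  assert (HNz : INR N <= z) by lra.
  assert (Hln : 1 <= ln z).
  { rewrite <- (ln_exp 1) at 1. apply ln_le; [apply exp_pos|]. pose proof exp_le_3. lra. }
  assert (HlnN : 0 <= ln (INR N)).
  { rewrite <- ln_1. apply ln_le; [lra|]. apply (le_INR 1). auto. }
  assert (HlnNz : ln (INR N) <= ln z) by (apply ln_le; [apply INR_pos; auto|auto]).
  eapply Rle_trans; [apply c2_poly; auto|].
  assert ((1 + ln (INR N)) ^ 4 <= (2 * ln z) ^ 4) by (apply pow_incr; lra).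
  replace ((2 * ln z) ^ 4) with (16 * ln z ^ 4) in H by ring.
  nra.
Qed.
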